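(* Let $\mathcal{X}$ be a finite set, $\mathcal{Z}$ a measurable space with a measure $\mu$, and $V:\mathcal{X}\to\mathcal{Z}$ a channel such that for each $x\in\mathcal{X}$ the probability measure $V(\cdot\mid x)$ has density $\omega(z\mid x)$ with respect to $\mu$. Let $\{f_s:\mathcal{X}\to\{0,1\}^k,\ s\in\mathcal{S}\}$ be a $b$-balanced $k$-bit UHF with finite seed set $\mathcal{S}$. Let $M$ be uniformly distributed on $\mathcal{M}=\{0,1\}^k$, let $S$ be uniformly distributed on $\mathcal{S}$ and independent of $M$, and given $M=m$, $S=s$, let $X$ be uniformly distributed on $f_s^{-1}(m)$; let $Z$ be the output of $V$ with input $X$ (so that, given $X$, $Z$ is conditionally independent of $(M,S)$ with law $V(\cdot\mid X)$). Then for every $\epsilon\in[0,1)$, \[ I(M\wedge Z,S)\le \frac{1}{\ln 2}\cdot 2^{-(b-I_{\max}^{\epsilon}(V))}+\epsilon k, \] where mutual information is measured in bits.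
   Context: A family $\{f_s: s\in\mathcal{S}\}$ of maps $f_s:\mathcal{X}\to\{0,1\}^k$ is a ($k$-bit) 2-universal hash family (UHF) if for all $x\neq x'$ in $\mathcal{X}$, $\frac{1}{|\mathcal{S}|}|\{s\in\mathcal{S}: f_s(x)=f_s(x')\}|\le 2^{-k}$. It is $b$-balanced if for every $s\in\mathcal{S}$ and every $m\in\{0,1\}^k$, $|\{x\in\mathcal{X}: f_s(x)=m\}|=2^b$. For a (possibly subnormalized) channel $V$ with densities $\omega(z\mid x)$ w.r.t. $\mu$, its max-information is $I_{\max}(V)=\log_2\int_{\mathcal{Z}}\max_{x\in\mathcal{X}}\omega(z\mid x)\,\mu(dz)$. For $\mathcal{T}\subseteq\mathcal{X}\times\mathcal{Z}$, $V_{\mathcal{T}}$ is the subnormalized channel with density $\omega_{\mathcal{T}}(z\mid x)=\omega(z\mid x)$ if $(x,z)\in\mathcal{T}$ and $0$ otherwise. The $\epsilon$-smooth max-information $I_{\max}^{\epsilon}(V)$ is the infimum of $I_{\max}(V_{\mathcal{T}})$ over all (measurable) $\mathcal{T}\subseteq\mathcal{X}\times\mathcal{Z}$ such that $V(\{z:(x,z)\in\mathcal{T}\}\mid x)\ge 1-\epsilon$ for all $x\in\mathcal{X}$. *)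

(* Defs.v *)
From HB Require Import structures.
From mathcomp Require Import all_boot all_order all_algebra.
From mathcomp Require Import all_classical all_reals all_analysis.
Set Implicit Arguments. Unset Strict Implicit. Unset Printing Implicit Defensive.
Import Order.TTheory GRing.Theory Num.Theory.
Local Open Scope classical_set_scope.
Local Open Scope ring_scope.

Section Defs.
Context {R : realType}.

(** base-2 logarithm on reals (ln x = 0 for x <= 0 in the library; only used
    in the form a * log2 (a / c), where a = 0 gives the convention 0 log 0 = 0) *)
Definition log2 (x : R) : R := ln x / ln 2.

Definition log2e (x : \bar R) : \bar R :=
  match x with
  | EFin r => if r == 0 then -oo%E else (log2 r)%:E
  | +oo%E => +oo%E
  | -oo%E => -oo%E
  end.

Definition exp2e (x : \bar R) : \bar R :=
  match x with
  | EFin r => (2 `^ r)%:E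
  | +oo%E => +oo%E
  | -oo%E => 0%E
  end.

Definition is_UHF (X Sd : finType) (k : nat) (f : Sd -> X -> k.-tuple bool) : Prop :=
  forall x x' : X, x != x' ->
    (#|[set s : Sd | f s x == f s x']|%:R / #|Sd|%:R : R) <= (2%:R : R) ^- k.

Definition is_balanced (X Sd : finType) (k b : nat) (f : Sd -> X -> k.-tuple bool) : Prop :=
  forall (s : Sd) (m : k.-tuple bool), #|[set x : X | f s x == m]| = (2 ^ b)%N.

Context {d : measure_display} {Z : measurableType d}.
Variable mu : {measure set Z -> \bar R}.

(** Mutual information (in bits) I(M /\ Y) between a discrete random variable M
    with pmf PM and a random variable Y = (S, Z) taking values in Sd x Z, where
    the conditional law of Y given M = m has density q m w.r.t. counting x mu:
       I(M /\ Y) = sum_m PM(m) D(P_{Y|M=m} || P_Y)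
                 = sum_m PM(m) sum_s int q(s,z|m) log2 (q(s,z|m) / qY(s,z)) dmu(z),
    with qY(s,z) = sum_m' PM(m') q(s,z|m'). *)
Definition mutinfo_dc (M Sd : finType) (PM : M -> R) (q : M -> Sd -> Z -> R) : \bar R :=
  let qY := fun s z => \sum_(m' : M) PM m' * q m' s z in
  (\sum_(m : M) (PM m)%:E *
     \sum_(s : Sd) \int[mu]_z (q m s z * log2 (q m s z / qY s z))%:E)%E.

(** The model of the statement: M uniform on {0,1}^k, S uniform on Sd independent
    of M, X uniform on f_s^{-1}(m) given (M,S) = (m,s), Z ~ V(.|X).
    Density of (S,Z) given M = m w.r.t. counting x mu. *)
Definition SZ_given_M (X Sd : finType) (k : nat) (f : Sd -> X -> k.-tuple bool)
    (omega : X -> Z -> R) (m : k.-tuple bool) (s : Sd) (z : Z) : R :=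
  #|Sd|%:R^-1 * (#|[set x : X | f s x == m]|%:R^-1 *
                 \sum_(x : X | f s x == m) omega x z).

Definition MI_M_ZS (X Sd : finType) (k : nat) (f : Sd -> X -> k.-tuple bool)
    (omega : X -> Z -> R) : \bar R :=
  mutinfo_dc (fun _ : k.-tuple bool => #|{: k.-tuple bool}|%:R^-1)
             (SZ_given_M f omega).

Definition chan (X : finType) (omega : X -> Z -> R) (x : X) (A : set Z) : \bar R :=
  (\int[mu]_(z in A) (omega x z)%:E)%E.

Definition Imax_T (X : finType) (omega : X -> Z -> R) (T : set (X * Z)) : \bar R :=
  log2e (\int[mu]_z
          (\big[Num.max/0]_(x : X) (if (x, z) \in T then omega x z else 0))%:E)%E.

(** eps-smooth max-information: infimum over measurable T subset X x Z
    (X finite with the discrete sigma-algebra, so T is measurable iff each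
    section {z | (x,z) in T} is measurable) with V(T_x | x) >= 1 - eps. *)
Definition smooth_Imax (X : finType) (omega : X -> Z -> R) (eps : R) : \bar R :=
  ereal_inf [set Imax_T omega T | T in
    [set T : set (X * Z) |
      (forall x, measurable [set z | T (x, z)]) /\
      (forall x, ((1 - eps)%:E <= chan omega x [set z | T (x, z)])%E)]].

End Defs.

(* Main.v *)
Set Warnings "-all".
Require Import Defs.
From HB Require Import structures.
From mathcomp Require Import all_boot all_order all_algebra.
From mathcomp Require Import all_classical all_reals all_analysis.
From mathcomp.algebra_tactics Require Import ring lra.
Import Order.TTheory GRing.Theory Num.Theory.
Local Open Scope classical_set_scope.
Local Open Scope ring_scope.
Section RealLemmas.
Variable R : realType.

Lemma ln_le_sub1 {y : R} : 0 < y -> ln y <= y - 1.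
Proof.
move=> y0; have h : -1 < y - 1 by lra.
by have := le_ln1Dx h; rewrite addrC subrK.
Qed.

Lemma lsterm {a1 b1 a b : R} : 0 <= a1 -> 0 <= b1 -> 0 < a -> 0 < b ->
  (0 < a1 -> 0 < b1) ->
  a1 - b1 * a / b <= a1 * ln (a1 / b1) - a1 * ln (a / b).
Proof.
move=> a10 b10 a0 b0 hb.
have [a1g|a1le] := ltP 0 a1; last first.
  have -> : a1 = 0 by lra.
  rewrite !mul0r subrr sub0r oppr_le0.
  by apply: divr_ge0; [apply: mulr_ge0|]; lra.
have b1g := hb a1g.
have q0 : 0 < (a / b) / (a1 / b1) by apply: divr_gt0; apply: divr_gt0.
have h := ln_le_sub1 q0.
rewrite ln_div ?posrE ?divr_gt0 // in h.
have e : a1 * ((a / b) / (a1 / b1)) = b1 * a / b.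
  by field; rewrite ?gt_eqF.
have := ler_wpM2l (ltW a1g) h.
rewrite mulrBr mulrBr e mulr1 => h2.
lra.
Qed.

Lemma logsum {a1 a2 b1 b2 : R} : 0 <= a1 -> 0 <= a2 -> 0 <= b1 -> 0 <= b2 ->
  (0 < a1 -> 0 < b1) -> (0 < a2 -> 0 < b2) ->
  (a1 + a2) * ln ((a1 + a2) / (b1 + b2)) <=
  a1 * ln (a1 / b1) + a2 * ln (a2 / b2).
Proof.
move=> a10 a20 b10 b20 h1 h2.
have [a0|ap] := eqVneq (a1 + a2) 0.
  have e1 : a1 = 0 by lra.
  have e2 : a2 = 0 by lra.
  by rewrite e1 e2 add0r !mul0r addr0.
have ag : 0 < a1 + a2 by rewrite lt_neqAle eq_sym ap; lra.
have bg : 0 < b1 + b2.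
  have [a1g|a1le] := ltP 0 a1; first by have := h1 a1g; lra.
  have a2g : 0 < a2 by lra.
  by have := h2 a2g; lra.
have t1 := lsterm a10 b10 ag bg h1.
have t2 := lsterm a20 b20 ag bg h2.
have e : b1 * (a1 + a2) / (b1 + b2) + b2 * (a1 + a2) / (b1 + b2) = a1 + a2.
  by field; rewrite gt_eqF.
lra.
Qed.

Lemma ln2_gt0 : 0 < ln (2 : R).
Proof. by apply: ln_gt0; rewrite ltr1n. Qed.

Lemma pos_of_le {q y N : R} : 0 <= y -> 0 < N -> q <= N * y -> 0 < q -> 0 < y.
Proof.
move=> y0 N0 h q0; rewrite lt_neqAle y0 andbT; apply/negP => /eqP e.
by move: h; rewrite -e mulr0 => h; lra.
Qed.

Lemma L1pt {qt qc yt yc N : R} : 0 <= qt -> 0 <= qc -> 0 <= yt -> 0 <= yc ->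
  0 < N -> qt <= N * yt -> qc <= N * yc ->
  (qt + qc) * log2 ((qt + qc) / (yt + yc)) <=
  (ln 2)^-1 * (qt ^+ 2 / yt - qt) + log2 N * qc.
Proof.
move=> qt0 qc0 yt0 yc0 N0 ht hc.
have l2 := ln2_gt0.
have h1 := pos_of_le yt0 N0 ht.
have h2 := pos_of_le yc0 N0 hc.
have ls := logsum qt0 qc0 yt0 yc0 h1 h2.
have t1 : qt * ln (qt / yt) <= qt ^+ 2 / yt - qt.
  have [qg|qle] := ltP 0 qt; last first.
    have -> : qt = 0 by lra.
    by rewrite expr0n /= !mul0r subrr.
  have yg := h1 qg.
  have h := ln_le_sub1 (divr_gt0 qg yg).
  have := ler_wpM2l (ltW qg) h.
  have -> : qt * (qt / yt - 1) = qt ^+ 2 / yt - qt by rewrite mulrBr mulr1 expr2 mulrA.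
  by [].
have t2 : qc * ln (qc / yc) <= ln N * qc.
  have [qg|qle] := ltP 0 qc; last first.
    have -> : qc = 0 by lra.
    by rewrite !mul0r mulr0.
  have yg := h2 qg.
  have le1 : qc / yc <= N by rewrite ler_pdivrMr.
  have := ler_ln (divr_gt0 qg yg) N0.
  rewrite le1 => h.
  by rewrite mulrC; apply: ler_wpM2r => //; apply: ltW.
have key : (qt + qc) * ln ((qt + qc) / (yt + yc)) <=
           (qt ^+ 2 / yt - qt) + ln N * qc by lra.
rewrite /log2.
have -> : (qt + qc) * (ln ((qt + qc) / (yt + yc)) / ln 2) =
  (ln 2)^-1 * ((qt + qc) * ln ((qt + qc) / (yt + yc))).
  by ring.
have -> : (ln 2)^-1 * (qt ^+ 2 / yt - qt) + ln N / ln 2 * qc =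
  (ln 2)^-1 * ((qt ^+ 2 / yt - qt) + ln N * qc).
  by ring.
by apply: ler_wpM2l => //; rewrite invr_ge0 ltW.
Qed.

Lemma g_bounds {q y : R} (k : nat) : 0 <= q -> 0 <= y -> q <= 2 ^+ k * y ->
  `|q * log2 (q / y)| <= k%:R * q + (ln 2)^-1 * y.
Proof.
move=> q0 y0 hq.
have l2 := ln2_gt0.
have Ng : 0 < (2 : R) ^+ k by rewrite exprn_gt0.
have il2 : 0 < (ln (2 : R))^-1 by rewrite invr_gt0.
have [qg|qle] := ltP 0 q; last first.
  have -> : q = 0 by lra.
  rewrite mul0r normr0 mulr0 add0r; apply: mulr_ge0 => //; exact: ltW.
have yg := pos_of_le y0 Ng hq qg.
have qyg : 0 < q / y by apply: divr_gt0.
have up : log2 (q / y) <= k%:R.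
  have le1 : q / y <= 2 ^+ k by rewrite ler_pdivrMr.
  have := ler_ln qyg Ng; rewrite le1 lnXn // => h.
  rewrite /log2 ler_pdivrMr // -mulr_natr; lra.
have low : q - y <= q * ln (q / y).
  have h := ln_le_sub1 (divr_gt0 yg qg).
  have e : ln (y / q) = - ln (q / y) by rewrite -lnV ?posrE // invf_div.
  rewrite e in h.
  have := ler_wpM2l (ltW qg) h.
  have -> : q * (y / q - 1) = y - q by field; rewrite gt_eqF.
  lra.
rewrite ler_norml; apply/andP; split.
  rewrite /log2 mulrA.
  have : (q - y) * (ln 2)^-1 <= q * ln (q / y) * (ln 2)^-1 by apply: ler_wpM2r => //; exact: ltW.
  have : 0 <= k%:R * q by apply: mulr_ge0 => //; exact: ltW.
  have : 0 <= q * (ln 2)^-1 by apply: mulr_ge0; exact: ltW.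
  nra.
have : q * log2 (q / y) <= q * k%:R by apply: ler_wpM2l => //; exact: ltW.
have : 0 <= (ln 2)^-1 * y by apply: mulr_ge0; exact: ltW.
nra.
Qed.

End RealLemmas.
Section Comb.
Variable R : realType.
Variables (X Sd : finType) (k b : nat) (f : Sd -> X -> k.-tuple bool).
Hypothesis f_uhf : is_UHF (R := R) f.
Hypothesis f_bal : is_balanced b f.

Let N : R := #|{: k.-tuple bool}|%:R.
Let B : R := (2 ^ b)%:R.
Let sig : R := #|Sd|%:R.

Definition Q (t : X -> R) (m : k.-tuple bool) (s : Sd) : R :=
  #|Sd|%:R^-1 * (#|[set x : X | f s x == m]|%:R^-1 *
                 \sum_(x : X | f s x == m) t x).

Definition QY (t : X -> R) (s : Sd) : R :=
  \sum_(m' : k.-tuple bool) #|{: k.-tuple bool}|%:R^-1 * Q t m' s.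

Lemma N_eq : N = 2 ^+ k.
Proof. by rewrite /N card_tuple card_bool natrX. Qed.

Lemma N_gt0 : 0 < N.
Proof. by rewrite N_eq exprn_gt0. Qed.

Lemma B_gt0 : 0 < B.
Proof. by rewrite /B ltr0n expn_gt0. Qed.

Lemma le_bigmaxR (t : X -> R) x : t x <= \big[Num.max/0]_(y : X) t y.
Proof. by rewrite (bigD1 x) //= le_max lexx. Qed.

Lemma bigmaxR_ge0 (t : X -> R) : 0 <= \big[Num.max/0]_(y : X) t y.
Proof. by elim/big_rec: _ => // i v _ h; rewrite le_max h orbT. Qed.

Lemma part_sum (F : X -> R) s :
  \sum_(m : k.-tuple bool) \sum_(x | f s x == m) F x = \sum_x F x.
Proof. by rewrite (partition_big (f s) xpredT). Qed.

Lemma Q_eq t m s : Q t m s = (sig * B)^-1 * \sum_(x | f s x == m) t x.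
Proof. by rewrite /Q f_bal invfM mulrA. Qed.

Lemma QY_eq t s : QY t s = (N * B * sig)^-1 * \sum_x t x.
Proof.
rewrite /QY -(part_sum _ s) mulr_sumr; apply: eq_bigr => m _.
by rewrite Q_eq mulrA -invfM [sig * B]mulrC mulrA.
Qed.

Lemma Q_ge0 t m s : (forall x, 0 <= t x) -> 0 <= Q t m s.
Proof.
move=> t0; rewrite Q_eq; apply: mulr_ge0; last by apply: sumr_ge0.
by rewrite invr_ge0 mulr_ge0 // ?ler0n // ltW // B_gt0.
Qed.

Lemma Q_le t m s : (forall x, 0 <= t x) -> Q t m s <= N * QY t s.
Proof.
move=> t0; rewrite /QY (bigD1 m) //= mulrDr mulrA mulfV ?gt_eqF ?N_gt0 // mul1r.
rewrite lerDl; apply: mulr_ge0; first exact: ltW N_gt0.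
by apply: sumr_ge0 => m' _; apply: mulr_ge0; [rewrite invr_ge0 ltW // N_gt0|exact: Q_ge0].
Qed.

Lemma QD t c m s : Q (fun x => t x + c x) m s = Q t m s + Q c m s.
Proof. by rewrite /Q big_split /= !mulrDr. Qed.

Lemma QYD t c s : QY (fun x => t x + c x) s = QY t s + QY c s.
Proof. by rewrite /QY -big_split /=; apply: eq_bigr => m _; rewrite QD mulrDr. Qed.


Lemma sq_part (t : X -> R) s : \sum_(m : k.-tuple bool) (\sum_(x | f s x == m) t x) ^+ 2 =
  \sum_x t x * \sum_(x' | f s x' == f s x) t x'.
Proof.
rewrite [RHS](partition_big (f s) xpredT) //=; apply: eq_bigr => m _.
rewrite expr2 mulr_suml; apply: eq_bigr => x /eqP ->.
by [].
Qed.

Lemma sum_cond_const (P : pred Sd) (c : R) :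
  \sum_(s | P s) c = c * #|[set s | P s]|%:R.
Proof.
rewrite (eq_bigl (fun s => s \in [set s | P s])); last by move=> s /=; apply/idP/idP => [h|]; [exact/mem_set|move/set_mem].
by rewrite sumr_const mulr_natr.
Qed.

Lemma coll_eq (t : X -> R) :
  \sum_s \sum_(m : k.-tuple bool) (\sum_(x | f s x == m) t x) ^+ 2 =
  \sum_x \sum_x' t x * t x' * #|[set s | f s x' == f s x]|%:R.
Proof.
under eq_bigr do rewrite sq_part.
rewrite exchange_big; apply: eq_bigr => x _.
under eq_bigr do rewrite mulr_sumr big_mkcond.
rewrite exchange_big; apply: eq_bigr => x' _.
by rewrite -big_mkcond /= sum_cond_const.
Qed.

Lemma coll_le (t : X -> R) : (forall x, 0 <= t x) ->
  \sum_s \sum_(m : k.-tuple bool) (\sum_(x | f s x == m) t x) ^+ 2 <=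
  sig * (\sum_x t x ^+ 2 + N^-1 * (\sum_x t x) ^+ 2).
Proof.
move=> t0; rewrite coll_eq.
have step x x' : t x * t x' * #|[set s | f s x' == f s x]|%:R <=
   (if x' == x then sig * (t x * t x') else 0) + sig * N^-1 * (t x * t x').
  have tt0 : 0 <= t x * t x' by apply: mulr_ge0.
  have cle : #|[set s | f s x' == f s x]|%:R <= sig.
    by rewrite /sig ler_nat max_card.
  have [e|neq] := eqVneq x' x.
    rewrite e in tt0 cle *.
    have h1 : t x * t x * #|[set s | f s x == f s x]|%:R <= sig * (t x * t x).
      by rewrite [X in _ <= X]mulrC; apply: ler_wpM2l.
    apply: (le_trans h1); rewrite lerDl.
    by apply: mulr_ge0 => //; apply: mulr_ge0; [rewrite /sig ler0n|rewrite invr_ge0 ltW // N_gt0].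
  rewrite add0r [X in _ <= X]mulrC; apply: ler_wpM2l => //.
  have [s0|sp] := eqVneq #|Sd| 0%N.
    by move: cle; rewrite /sig s0 mul0r.
  have sg : 0 < sig by rewrite /sig ltr0n lt0n sp.
  have neq' : x != x' by rewrite eq_sym.
  have := f_uhf x x' neq'; rewrite -/sig ler_pdivrMr // => h.
  have -> : [set s | f s x' == f s x] = [set s | f s x == f s x'].
    by apply: eq_set => s; rewrite eq_sym.
  by rewrite N_eq (le_trans h) // mulrC.
apply: (le_trans (ler_sum _ (fun x _ => ler_sum _ (fun x' _ => step x x')))).
under eq_bigr do rewrite big_split /=.
rewrite big_split /=.
have e1 : \sum_x \sum_x' (if x' == x then sig * (t x * t x') else 0) =
          sig * \sum_x t x ^+ 2.
  rewrite mulr_sumr; apply: eq_bigr => x _.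
  by rewrite -big_mkcond /= big_pred1_eq expr2.
have e2 : \sum_x \sum_x' sig * N^-1 * (t x * t x') =
          sig * (N^-1 * (\sum_x t x) ^+ 2).
  rewrite mulrA expr2 mulr_suml mulr_sumr; apply: eq_bigr => x _.
  rewrite mulr_sumr mulr_sumr; apply: eq_bigr => x' _.
  by rewrite mulrA.
by rewrite e1 e2 mulrDr.
Qed.

Lemma chi_bound (t : X -> R) : (forall x, 0 <= t x) ->
  \sum_(m : k.-tuple bool) N^-1 * \sum_s Q t m s ^+ 2 / QY t s <=
  B^-1 * \big[Num.max/0]_(x : X) t x + (N * B)^-1 * \sum_x t x.
Proof.
move=> t0; set W := \sum_x t x; set M := \big[Num.max/0]_(x : X) t x.
have W0 : 0 <= W by apply: sumr_ge0.
have M0 : 0 <= M by apply: bigmaxR_ge0.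
have Bg := B_gt0; have Ng := N_gt0.
have rhs0 : 0 <= B^-1 * M + (N * B)^-1 * W.
  by apply: addr_ge0; apply: mulr_ge0 => //; rewrite invr_ge0 ?mulr_ge0 // ltW.
have [s0|sp] := eqVneq #|Sd| 0%N.
  rewrite big1 // => m _; rewrite big1 ?mulr0 // => s _.
  have : (0 < #|Sd|)%N by apply/card_gt0P; exists s.
  by rewrite s0.
have sg : 0 < sig by rewrite /sig ltr0n lt0n sp.
have [Wz|Wp] := eqVneq W 0.
  rewrite big1 // => m _; rewrite big1 ?mulr0 // => s _.
  by rewrite QY_eq -/W Wz mulr0 invr0 mulr0.
have Wg : 0 < W by rewrite lt_neqAle eq_sym Wp W0.
have e2 : \sum_(m : k.-tuple bool) N^-1 * \sum_s Q t m s ^+ 2 / QY t s =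
   (sig * B * W)^-1 * \sum_s \sum_(m : k.-tuple bool) (\sum_(x | f s x == m) t x) ^+ 2.
  transitivity (\sum_(m : k.-tuple bool) \sum_s (sig * B * W)^-1 *
                  (\sum_(x | f s x == m) t x) ^+ 2).
    apply: eq_bigr => m _; rewrite mulr_sumr; apply: eq_bigr => s _.
    rewrite Q_eq QY_eq -/W; field.
    by rewrite !gt_eqF.
  rewrite exchange_big (mulr_sumr _ _ _ ((sig * B * W)^-1)); apply: eq_bigr => s _.
  by rewrite (mulr_sumr _ _ _ ((sig * B * W)^-1)).
rewrite e2.
have c0 : 0 <= (sig * B * W)^-1 by rewrite invr_ge0 !mulr_ge0 // ltW.
have h := ler_wpM2l c0 (coll_le t t0).
apply: (le_trans h).
have St2 : \sum_x t x ^+ 2 <= M * W.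
  rewrite /W mulr_sumr; apply: ler_sum => x _.
  by rewrite expr2 [M * _]mulrC; apply: ler_wpM2l => //; apply: le_bigmaxR.
have e3 : (sig * B * W)^-1 * (sig * (\sum_x t x ^+ 2 + N^-1 * W ^+ 2)) =
          (B * W)^-1 * \sum_x t x ^+ 2 + (N * B)^-1 * W.
  by field; rewrite !gt_eqF.
rewrite e3 lerD2r.
have c1 : 0 <= (B * W)^-1 by rewrite invr_ge0 !mulr_ge0 // ltW.
apply: le_trans (ler_wpM2l c1 St2) _.
have -> : (B * W)^-1 * (M * W) = B^-1 * M by field; rewrite !gt_eqF.
by [].
Qed.

Lemma QY_ge0 t s : (forall x, 0 <= t x) -> 0 <= QY t s.
Proof.
move=> t0; rewrite QY_eq; apply: mulr_ge0; last by apply: sumr_ge0.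
by rewrite invr_ge0 !mulr_ge0 ?ler0n // ltW // ?N_gt0 ?B_gt0.
Qed.

Definition Lsum (g : k.-tuple bool -> Sd -> R) : R :=
  \sum_(m : k.-tuple bool) N^-1 * \sum_s g m s.

Lemma Lsum_lin (a1 a3 : R) (g1 g2 g3 : k.-tuple bool -> Sd -> R) :
  Lsum (fun m s => a1 * (g1 m s - g2 m s) + a3 * g3 m s) =
  a1 * (Lsum g1 - Lsum g2) + a3 * Lsum g3.
Proof.
rewrite /Lsum -sumrB mulr_sumr [a3 * _]mulr_sumr -big_split /=.
apply: eq_bigr => m _.
have -> : \sum_s (a1 * (g1 m s - g2 m s) + a3 * g3 m s) =
   a1 * (\sum_s g1 m s - \sum_s g2 m s) + a3 * \sum_s g3 m s.
  by rewrite big_split /= -!mulr_sumr sumrB.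
ring.
Qed.

Lemma sumQ t : (0 < #|Sd|)%N -> Lsum (Q t) = (N * B)^-1 * \sum_x t x.
Proof.
move=> sp; have sg : 0 < sig by rewrite /sig ltr0n.
rewrite /Lsum.
under eq_bigr do rewrite mulr_sumr.
rewrite exchange_big /=.
under eq_bigr do rewrite -/(QY t _) QY_eq.
rewrite sumr_const -mulr_natl -/sig.
field; rewrite !gt_eqF ?N_gt0 ?B_gt0 //.
Qed.

Lemma log2N : log2 N = k%:R.
Proof.
have l2 := @ln2_gt0 R; rewrite /log2 N_eq lnXn // -mulr_natr; field.
by rewrite mul1r gt_eqF.
Qed.

Lemma Gpt (t c : X -> R) : (forall x, 0 <= t x) -> (forall x, 0 <= c x) ->
  Lsum (fun m s => Q (fun x => t x + c x) m s *
     log2 (Q (fun x => t x + c x) m s / QY (fun x => t x + c x) s))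
  <= (ln 2)^-1 * (B^-1 * \big[Num.max/0]_(x : X) t x) +
     k%:R * ((N * B)^-1 * \sum_x c x).
Proof.
move=> t0 c0.
have M0 := bigmaxR_ge0 t.
have Bg := B_gt0; have Ng := N_gt0; have l2 := @ln2_gt0 R.
have rhs0 : 0 <= (ln 2)^-1 * (B^-1 * \big[Num.max/0]_(x : X) t x) +
     k%:R * ((N * B)^-1 * \sum_x c x).
  apply: addr_ge0; apply: mulr_ge0.
  - by rewrite invr_ge0 ltW.
  - by apply: mulr_ge0 => //; rewrite invr_ge0 ltW.
  - by rewrite ler0n.
  - apply: mulr_ge0; first by rewrite invr_ge0 ltW // mulr_gt0.
    by apply: sumr_ge0.
have [s0|sp] := eqVneq #|Sd| 0%N.
  rewrite /Lsum big1 // => m _; rewrite big1 ?mulr0 // => s _.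
  have : (0 < #|Sd|)%N by apply/card_gt0P; exists s.
  by rewrite s0.
have sp' : (0 < #|Sd|)%N by rewrite lt0n.
apply: (@le_trans _ _ (Lsum (fun m s => (ln 2)^-1 * (Q t m s ^+ 2 / QY t s - Q t m s)
                                       + log2 N * Q c m s))).
  rewrite /Lsum; apply: ler_sum => m _; apply: ler_wpM2l.
    by rewrite invr_ge0 ltW.
  apply: ler_sum => s _; rewrite QD QYD.
  by apply: L1pt; rewrite ?Q_ge0 ?QY_ge0 ?Q_le.
rewrite Lsum_lin sumQ // sumQ // log2N.
rewrite lerD2r; apply: ler_wpM2l; first by rewrite invr_ge0 ltW.
have := chi_bound t t0; rewrite -/(Lsum _) => h.
lra.
Qed.

Lemma sig_ge1 (s : Sd) : 1 <= sig.
Proof.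
have : (0 < #|Sd|)%N by apply/card_gt0P; exists s.
by rewrite /sig ler1n.
Qed.

Lemma B_ge1 : 1 <= B.
Proof. by rewrite /B ler1n expn_gt0. Qed.

Lemma N_ge1 : 1 <= N.
Proof. by rewrite N_eq exprn_ege1 // ler1n. Qed.

Lemma sub_sum_le (t : X -> R) (P : pred X) : (forall x, 0 <= t x) ->
  \sum_(x | P x) t x <= \sum_x t x.
Proof.
move=> t0; rewrite big_mkcond /=; apply: ler_sum => x _.
by case: (P x).
Qed.

Lemma Q_le_sum t m s : (forall x, 0 <= t x) -> Q t m s <= \sum_x t x.
Proof.
move=> t0; rewrite Q_eq.
have h1 : 1 <= sig * B by rewrite -[1]mulr1; apply: ler_pM => //; [exact: sig_ge1|exact: B_ge1].
apply: (le_trans _ (@sub_sum_le t (fun x => f s x == m) t0)).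
apply: ler_piMl; first by apply: sumr_ge0.
by rewrite invf_le1 // (lt_le_trans ltr01 h1).
Qed.

Lemma QY_le_sum t s : (forall x, 0 <= t x) -> QY t s <= \sum_x t x.
Proof.
move=> t0; rewrite QY_eq.
have h1 : 1 <= N * B * sig.
  rewrite -[1]mulr1; apply: ler_pM => //; last exact: sig_ge1.
  by rewrite -[1]mulr1; apply: ler_pM => //; [exact: N_ge1|exact: B_ge1].
apply: ler_piMl; first by apply: sumr_ge0.
by rewrite invf_le1 // (lt_le_trans ltr01 h1).
Qed.

Lemma card_X (s : Sd) : #|X|%:R = N * B.
Proof.
have -> : #|X|%:R = \sum_(x : X) (1 : R) by rewrite sumr_const.
rewrite -(part_sum _ s).
transitivity (\sum_(m : k.-tuple bool) B).
  apply: eq_bigr => m _.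
  rewrite (eq_bigl (fun x => x \in [set x | f s x == m])); last first.
    by move=> x /=; apply/idP/idP => [h|]; [exact/mem_set|move/set_mem].
  by rewrite sumr_const f_bal /B.
by rewrite sumr_const /N mulr_natl.
Qed.

End Comb.
Section Meas.
Variable R : realType.
Variables (d : measure_display) (Z : measurableType d).
Variable mu : {measure set Z -> \bar R}.

Lemma mbigsum (I : Type) (r : seq I) (P : pred I) (F : I -> Z -> R) :
  (forall i, measurable_fun setT (F i)) ->
  measurable_fun setT (fun z => \sum_(i <- r | P i) F i z).
Proof.
move=> mF; elim: r => [|i r ih].
  by under eq_fun do rewrite big_nil; exact: measurable_cst.
under eq_fun do rewrite big_cons; case: (P i) => //.
exact: measurable_realfun.measurable_funD.
Qed.

Lemma mbigmax (I : Type) (r : seq I) (P : pred I) (F : I -> Z -> R) :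
  (forall i, measurable_fun setT (F i)) ->
  measurable_fun setT (fun z => \big[Num.max/0]_(i <- r | P i) F i z).
Proof.
move=> mF; elim: r => [|i r ih].
  by under eq_fun do rewrite big_nil; exact: measurable_cst.
under eq_fun do rewrite big_cons; case: (P i) => //.
exact: measurable_realfun.measurable_maxr.
Qed.

Lemma mcM (c : R) (g : Z -> R) : measurable_fun setT g ->
  measurable_fun setT (fun z => c * g z).
Proof. by move=> mg; apply: measurable_realfun.measurable_funM => //; exact: measurable_cst. Qed.

Lemma mpatch (A : set Z) (g : Z -> R) : measurable A -> measurable_fun setT g ->
  measurable_fun setT (fun z => if z \in A then g z else 0).
Proof.
move=> mA mg; have := (measurable_restrictT g mA).1 (measurable_funS measurableT (@subsetT _ A) mg).
by apply: eq_measurable_fun => z _; rewrite patchE.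
Qed.

Lemma integrable_ge0 (g : Z -> R) : measurable_fun setT g -> (forall z, 0 <= g z) ->
  (\int[mu]_z (g z)%:E < +oo)%E -> mu.-integrable setT (EFin \o g).
Proof.
move=> mg g0 fin; apply/integrableP; split.
  exact/measurable_realfun.measurable_EFinP.
rewrite (@eq_integral _ _ _ mu setT (fun z => (g z)%:E)) // => z _ /=.
by rewrite ger0_norm.
Qed.

End Meas.

Arguments Q {R X Sd k} f t m s.
Arguments QY {R X Sd k} f t s.
Arguments Lsum {R Sd k} g.
Arguments Q_ge0 {R X Sd k b f} f_bal t m s _.
Arguments QY_ge0 {R X Sd k b f} f_bal t s _.
Arguments Q_le {R X Sd k b f} f_bal t m s _.
Arguments Q_le_sum {R X Sd k b f} f_bal t m s _.
Arguments QY_le_sum {R X Sd k b f} f_bal t s _.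
Arguments Gpt {R X Sd k b f} f_uhf f_bal t c _ _.
Arguments card_X {R X Sd k b f} f_bal s.
Arguments mcM {R d Z} c g _.
Arguments mbigsum {R d Z I} r P F _.
Arguments mbigmax {R d Z I} r P F _.
Arguments mpatch {R d Z} A g _ _.
Arguments integrable_ge0 {R d Z} mu g _ _ _.
Arguments pos_of_le {R q y N} _ _ _ _.
Arguments g_bounds {R q y} k _ _ _.
Lemma exp2e_ge0 (R : realType) (x : \bar R) : (0 <= exp2e x)%E.
Proof. by case: x => [r| |] //=; rewrite lee_fin powR_ge0. Qed.

Lemma powR_log2 (R : realType) (y : R) : 0 < y -> 2 `^ (log2 y) = y.
Proof.
move=> y0; rewrite /powR /log2.
have -> : ((2 : R) == 0) = false by apply/negbTE; rewrite pnatr_eq0.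
rewrite divfK ?lnK ?posrE //.
by rewrite gt_eqF // ln2_gt0.
Qed.

Lemma log2e_lt (R : realType) (J : \bar R) (r : R) : (0 <= J)%E ->
  (log2e J < r%:E)%E -> (J <= (2 `^ r)%:E)%E.
Proof.
case: J => [j| |] //= j0.
  case: ifPn => [/eqP -> _|jn]; first by rewrite lee_fin powR_ge0.
  rewrite lte_fin => h.
  have jp : 0 < j by rewrite lt_neqAle eq_sym jn -lee_fin.
  rewrite lee_fin -{1}(@powR_log2 _ j jp); apply: ler_powR; last exact: ltW.
  by rewrite ler1n.
Qed.

Theorem lemma4 (R : realType) (d : measure_display) (Z : measurableType d)
  (mu : {measure set Z -> \bar R}) (X : finType) (omega : X -> Z -> R)
  (omega_ge0 : forall x z, 0 <= omega x z)
  (omega_meas : forall x, measurable_fun setT (omega x))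
  (omega_prob : forall x, (\int[mu]_z (omega x z)%:E = 1)%E)
  (k b : nat) (Sd : finType) (f : Sd -> X -> k.-tuple bool)
  (f_uhf : is_UHF (R := R) f) (f_bal : is_balanced b f)
  (eps : R) (eps_ge0 : 0 <= eps) (eps_lt1 : eps < 1) :
  (MI_M_ZS mu f omega <=
     (ln 2)^-1%:E * exp2e (smooth_Imax mu omega eps - (b%:R)%:E) + (eps * k%:R)%:E)%E.
Proof.
have w0 := omega_ge0.
pose Nr : R := #|{: k.-tuple bool}|%:R.
pose Br : R := (2 ^ b)%:R.
pose q m s z := Q f (fun x => omega x z) m s.
pose y s z := QY f (fun x => omega x z) s.
pose g m s z := q m s z * log2 (q m s z / y s z).
have MIe : MI_M_ZS mu f omega = (\sum_(m : k.-tuple bool) (Nr^-1)%:E *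
   \sum_(s : Sd) \int[mu]_z (g m s z)%:E)%E by [].
have l2 := ln2_gt0 R.
have rhs0 : (0 <= (ln 2)^-1%:E * exp2e (smooth_Imax mu omega eps - (b%:R)%:E)
                 + (eps * k%:R)%:E)%E.
  apply: adde_ge0; last by rewrite lee_fin mulr_ge0 // ler0n.
  by apply: mule_ge0; [rewrite lee_fin invr_ge0 ltW|exact: exp2e_ge0].
have [s0|sp] := eqVneq #|Sd| 0%N.
  rewrite MIe big1 // => m _; rewrite big1 ?mule0 // => s _.
  have : (0 < #|Sd|)%N by apply/card_gt0P; exists s.
  by rewrite s0.
have /card_gt0P [s1 _] : (0 < #|Sd|)%N by rewrite lt0n.
have Ng : 0 < Nr := N_gt0 R k.
have NE : Nr = 2 ^+ k := N_eq R k.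
have omint x : mu.-integrable setT (EFin \o omega x).
  by apply: integrable_ge0 => //; rewrite omega_prob ltry.
have q0 m s z : 0 <= q m s z := Q_ge0 f_bal _ m s (fun x => w0 x z).
have y0 s z : 0 <= y s z := QY_ge0 f_bal _ s (fun x => w0 x z).
have qy m s z : q m s z <= Nr * y s z := Q_le f_bal _ m s (fun x => w0 x z).
have mq m s : measurable_fun setT (q m s).
  rewrite /q /Q; apply: mcM; apply: mcM; apply: mbigsum => x; exact: omega_meas.
have my s : measurable_fun setT (y s).
  rewrite /y /QY; apply: mbigsum => m; apply: mcM; exact: mq.
have mg m s : measurable_fun setT (g m s).
  have -> : g m s = fun z => (ln 2)^-1 * (q m s z * (ln (q m s z) - ln (y s z))).
    apply: funext => z; rewrite /g /log2.
    have [qp|qn] := ltP 0 (q m s z); last first.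
      have -> : q m s z = 0 by have := q0 m s z; lra.
      by rewrite !mul0r mulr0.
    have yp := pos_of_le (y0 s z) Ng (qy m s z) qp.
    rewrite ln_div ?posrE //; ring.
  apply: mcM; apply: measurable_realfun.measurable_funM; first exact: mq.
  apply: measurable_realfun.measurable_funB; apply: measurableT_comp;
    [exact: measurable_realfun.measurable_ln|exact: mq|
     exact: measurable_realfun.measurable_ln|exact: my].
pose C : R := k%:R + (ln 2)^-1.
have Wint : mu.-integrable setT (EFin \o (fun z => C * \sum_x omega x z)).
  apply: (eq_integrable measurableT (fun z => (C%:E * \sum_x (omega x z)%:E)%E)).
    by move=> z _ /=; rewrite sumEFin EFinM.
  apply: integrableZl => //; apply: integrable_sum => // x _; exact: omint.
have gint m s : mu.-integrable setT (EFin \o g m s).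
  apply: (le_integrable measurableT _ _ Wint).
    exact/measurable_realfun.measurable_EFinP.
  move=> z _ /=; rewrite lee_fin.
  have qy' : q m s z <= 2 ^+ k * y s z by rewrite -NE; exact: qy.
  have hb := g_bounds k (q0 m s z) (y0 s z) qy'.
  apply: (le_trans hb); rewrite [X in _ <= X]ger0_norm; last first.
    by apply: mulr_ge0; [apply: addr_ge0 => //; rewrite invr_ge0 ltW|apply: sumr_ge0].
  rewrite /C mulrDl; apply: lerD.
    by apply: ler_wpM2l => //; apply: Q_le_sum.
  by apply: ler_wpM2l; [rewrite invr_ge0 ltW|apply: QY_le_sum].
have sint m : mu.-integrable setT (fun z => \sum_(s : Sd) (g m s z)%:E)%E.
  by apply: integrable_sum => // s _; exact: gint.
have e1 z : ((Lsum (fun m s => g m s z))%:E =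
    \sum_(m : k.-tuple bool) ((Nr^-1)%:E * \sum_(s : Sd) (g m s z)%:E))%E.
  rewrite /Lsum -sumEFin; apply: eq_bigr => m _.
  by rewrite EFinM sumEFin.
have Gint : mu.-integrable setT (fun z => (Lsum (fun m s => g m s z))%:E).
  apply: (eq_integrable measurableT
     (fun z => \sum_(m : k.-tuple bool) ((Nr^-1)%:E * \sum_(s : Sd) (g m s z)%:E))%E).
    by move=> z _; rewrite e1.
  by apply: integrable_sum => // m _; apply: integrableZl => //; exact: sint.
have eA : MI_M_ZS mu f omega =
    (\int[mu]_z (Lsum (fun m s => g m s z))%:E)%E.
  rewrite MIe.
  rewrite (@eq_integral _ _ _ mu setT
     (fun z => \sum_(m : k.-tuple bool) ((Nr^-1)%:E * \sum_(s : Sd) (g m s z)%:E))%E);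
    last by move=> z _; rewrite e1.
  rewrite integral_sum //; last first.
    by move=> m; apply: integrableZl => //; exact: sint.
  apply: eq_bigr => m _; rewrite integralZl //.
  by rewrite integral_sum // => s; exact: gint.
pose adm (T : set (X * Z)) := (forall x, measurable [set z | T (x, z)]) /\
   (forall x, ((1 - eps)%:E <= chan mu omega x [set z | T (x, z)])%E).
pose J (T : set (X * Z)) := (\int[mu]_z
   (\big[Num.max/0]_(x : X) (if (x, z) \in T then omega x z else 0))%:E)%E.
have perT : forall T, adm T -> (MI_M_ZS mu f omega <=
     ((ln 2)^-1 * Br^-1)%:E * J T + (eps * k%:R)%:E)%E.
  move=> T [mT chT].
  pose t z x := if (x, z) \in T then omega x z else 0.
  pose c z x := omega x z - t z x.
  have t0 z x : 0 <= t z x by rewrite /t; case: ifP.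
  have tle z x : t z x <= omega x z by rewrite /t; case: ifP.
  have c0 z x : 0 <= c z x by rewrite /c subr_ge0.
  have memT x z : ((x, z) \in T) = (z \in [set z | T (x, z)]).
    by apply/idP/idP => /set_mem h; apply/mem_set.
  have mt x : measurable_fun setT (fun z => t z x).
    have := mpatch _ (omega x) (mT x) (omega_meas x).
    by apply: eq_measurable_fun => z _; rewrite /t memT.
  have mc x : measurable_fun setT (fun z => c z x).
    exact: measurable_realfun.measurable_funB.
  have mM : measurable_fun setT (fun z => \big[Num.max/0]_(x : X) t z x).
    exact: (mbigmax _ _ (fun x z => t z x) mt).
  have M0 z : 0 <= \big[Num.max/0]_(x : X) t z x by apply: bigmaxR_ge0.
  have Bg : 0 < Br by rewrite /Br ltr0n expn_gt0.
  have a0 : 0 < (ln 2)^-1 * Br^-1 by rewrite mulr_gt0 // invr_gt0.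
  have [Jinf|Jfin] := eqVneq (J T) +oo%E.
    by rewrite Jinf mulry gtr0_sg // mul1e addye // leey.
  have J0 : (0 <= J T)%E by apply: integral_ge0 => z _; rewrite lee_fin; exact: (M0 z).
  have Jf : J T \is a fin_num by rewrite ge0_fin_numE // ltey.
  pose F z := (ln 2)^-1 * (Br^-1 * \big[Num.max/0]_(x : X) t z x) +
              k%:R * ((Nr * Br)^-1 * \sum_x c z x).
  have GF z : Lsum (fun m s => g m s z) <= F z.
    rewrite /g /q /y.
    have -> : (fun x => omega x z) = (fun x => t z x + c z x).
      by apply: funext => x; rewrite /c addrC subrK.
    exact: (Gpt f_uhf f_bal (t z) (c z) (t0 z) (c0 z)).
  have b0 : 0 <= k%:R * (Nr * Br)^-1 by rewrite mulr_ge0 // invr_ge0 mulr_ge0 // ltW.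
  have Fm : measurable_fun setT F.
    apply: measurable_realfun.measurable_funD; apply: mcM; apply: mcM => //.
    by apply: mbigsum.
  have F0 z : 0 <= F z.
    apply: addr_ge0.
      apply: mulr_ge0; first by rewrite invr_ge0 ltW.
      by apply: mulr_ge0 => //; rewrite invr_ge0 ltW.
    apply: mulr_ge0; first by rewrite ler0n.
    apply: mulr_ge0; first by rewrite invr_ge0 mulr_ge0 // ltW.
    by apply: sumr_ge0.
  have intF : (\int[mu]_z (F z)%:E = ((ln 2)^-1 * Br^-1)%:E * J T +
      (k%:R * (Nr * Br)^-1)%:E * \sum_x \int[mu]_z (c z x)%:E)%E.
    rewrite (@eq_integral _ _ _ mu setT (fun z =>
       ((ln 2)^-1 * Br^-1)%:E * (\big[Num.max/0]_(x : X) t z x)%:E +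
       (k%:R * (Nr * Br)^-1)%:E * \sum_x (c z x)%:E)%E); last first.
      move=> z _; rewrite sumEFin -!EFinM -EFinD /F; congr EFin; ring.
    rewrite ge0_integralD //; last 4 first.
    - by move=> z _; rewrite -EFinM lee_fin mulr_ge0 // ltW.
    - by apply: measurable_funeM; exact/measurable_realfun.measurable_EFinP.
    - by move=> z _; rewrite sumEFin -EFinM lee_fin mulr_ge0 // sumr_ge0.
    - apply: measurable_funeM; apply: emeasurable_sum => x.
      exact/measurable_realfun.measurable_EFinP.
    rewrite ge0_integralZl_EFin //; last 3 first.
    - by move=> z _; rewrite lee_fin.
    - exact/measurable_realfun.measurable_EFinP.
    - exact: ltW.
    rewrite ge0_integralZl_EFin //; last 2 first.
    - by move=> z _; rewrite sumEFin lee_fin sumr_ge0.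
    - apply: emeasurable_sum => x; exact/measurable_realfun.measurable_EFinP.
    rewrite ge0_integral_sum //.
    - by move=> x; exact/measurable_realfun.measurable_EFinP.
    - by move=> x z _; rewrite lee_fin.
  have cint x : (\int[mu]_z (c z x)%:E <= eps%:E)%E.
    have tint : mu.-integrable setT (EFin \o (fun z => t z x)).
      apply: (le_integrable measurableT _ _ (omint x)).
        exact/measurable_realfun.measurable_EFinP.
      by move=> z _ /=; rewrite lee_fin !ger0_norm.
    rewrite /c integralB_EFin //= omega_prob.
    have ct := chT x.
    have e : chan mu omega x [set z | T (x, z)] = (\int[mu]_z (t z x)%:E)%E.
      rewrite /chan integral_mkcond; apply: eq_integral => z _.
      by rewrite patchE /t memT; case: ifP.
    rewrite e in ct.
    have fin := integrable_fin_num measurableT tint.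
    move: ct; rewrite /= -(fineK fin) -EFinB !lee_fin => ct.
    lra.
  have intF_le : (\int[mu]_z (F z)%:E <=
       ((ln 2)^-1 * Br^-1)%:E * J T + (eps * k%:R)%:E)%E.
    rewrite intF; apply: leeD2l.
    have hs : (\sum_x \int[mu]_z (c z x)%:E <= (#|X|%:R * eps)%:E)%E.
      apply: (@le_trans _ _ (\sum_(x : X) eps%:E)%E); first exact: lee_sum.
      by rewrite sumEFin sumr_const mulr_natl.
    apply: le_trans (lee_wpmul2l _ hs) _; first by rewrite lee_fin.
    rewrite -EFinM lee_fin (card_X f_bal s1) -/Nr -/Br.
    have -> : k%:R * (Nr * Br)^-1 * (Nr * Br * eps) = eps * k%:R.
      by field; rewrite -/Nr -/Br !gt_eqF.
    by [].
  have Fint : mu.-integrable setT (EFin \o F).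
    apply: integrable_ge0 => //.
    apply: le_lt_trans intF_le _.
    by rewrite -(fineK Jf) -EFinM -EFinD ltry.
  apply: le_trans intF_le; rewrite eA.
  apply: le_integral => //.
  by move=> z _; rewrite lee_fin.
have Bg : 0 < Br by rewrite /Br ltr0n expn_gt0.
pose a : R := (ln 2)^-1 * Br^-1.
have ag : 0 < a by rewrite mulr_gt0 // invr_gt0.
have keyr : forall r : R, (smooth_Imax mu omega eps < r%:E)%E ->
    (MI_M_ZS mu f omega <= (a * 2 `^ r)%:E + (eps * k%:R)%:E)%E.
  move=> r /ereal_inf_lt [v [T admT <-] lt].
  have h := perT T admT.
  have J0 : (0 <= J T)%E.
    by apply: integral_ge0 => z _; rewrite lee_fin; apply: bigmaxR_ge0.
  have JleT := log2e_lt _ _ _ J0 lt.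
  apply: (le_trans h); apply: leeD2r.
  have a0 : (0 <= a%:E)%E by rewrite lee_fin ltW.
  by rewrite EFinM; exact: (lee_wpmul2l a0 JleT).
case E: (smooth_Imax mu omega eps) => [r0| |].
- rewrite -EFinB /=.
  apply/lee_addgt0Pr => e e0.
  pose P := 2 `^ r0.
  have Pg : 0 < P by apply: powR_gt0.
  pose e' := e / (a * P).
  have e'g : 0 < e' by rewrite divr_gt0 // mulr_gt0.
  pose r := r0 + log2 (1 + e').
  have rg : r0 < r.
    rewrite /r ltrDl /log2 divr_gt0 //; apply: ln_gt0; lra.
  have := keyr r; rewrite E lte_fin => /(_ rg) h.
  apply: (le_trans h).
  have e2 : 2 `^ r = P * (1 + e').
    by rewrite /r powRD ?pnatr_eq0 ?implybT // powR_log2 //; lra.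
  have e3 : 2 `^ (r0 - b%:R) = P / Br.
    by rewrite powRB ?pnatr_eq0 ?implybT // powR_mulrn // /Br natrX.
  rewrite e2 e3 -!EFinM -!EFinD lee_fin.
  have -> : a * (P * (1 + e')) = a * P + e.
    by rewrite /e'; field; rewrite !gt_eqF.
  rewrite /a; lra.
- by rewrite /= mulry gtr0_sg ?invr_gt0 // mul1e addye // leey.
- rewrite /= mule0 add0e.
  apply/lee_addgt0Pr => e e0.
  pose r := log2 (e / a).
  have := keyr r; rewrite E ltNyr => /(_ isT) h.
  apply: (le_trans h).
  rewrite /r powR_log2; last by rewrite divr_gt0.
  by rewrite mulrC divfK ?gt_eqF // addeC.
Qed.
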